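(* Let $R$ be a commutative ring with identity and let $a\in R$ be a non-zero element with $a\notin R^{\ast}$. Consider the following conditions on $a$: (i) there exist $b\in R$ and $c\in\operatorname{Sqf} R$ such that $a=b^2c$; (ii) there exist $n\geqslant 0$ and $s_0,s_1,\dots,s_n\in\operatorname{Sqf} R$ such that $a=s_n^{2^n}s_{n-1}^{2^{n-1}}\cdots s_1^2s_0$; (iii) there exist $n\geqslant 1$, $s_1,\dots,s_n\in(\operatorname{Sqf} R)\setminus R^{\ast}$, integers $0\leqslant k_1<k_2<\dots<k_n$, and $c\in R^{\ast}$ such that $a=c\,s_n^{2^{k_n}}s_{n-1}^{2^{k_{n-1}}}\cdots s_1^{2^{k_1}}$; (iv) there exist $n\geqslant 1$ and $s_1,\dots,s_n\in\operatorname{Sqf} R$ such that $s_i\mid s_{i+1}$ for $i=1,\dots,n-1$ and $a=s_1s_2\cdots s_n$; (v) there exist $n\geqslant 1$, $s_1,\dots,s_n\in(\operatorname{Sqf} R)\setminus R^{\ast}$, integers $k_1,\dots,k_n\geqslant 1$, and $c\in R^{\ast}$ such that $s_i\mid s_{i+1}$ and $s_i\not\sim s_{i+1}$ for $i=1,\dots,n-1$, and $a=c\,s_1^{k_1}s_2^{k_2}\cdots s_n^{k_n}$; (vi) there exist $n\geqslant 1$ and $s_1,\dots,s_n\in\operatorname{Sqf} R$ such that $s_i$ and $s_j$ are relatively prime for $i\neq j$, and $a=s_1s_2^2s_3^3\cdots s_n^n$; (vii) there exist $n\geqslant 1$, $s_1,\dots,s_n\in(\operatorname{Sqf} R)\setminus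 R^{\ast}$, integers $1\leqslant k_1<k_2<\dots<k_n$, and $c\in R^{\ast}$ such that $s_i$ and $s_j$ are relatively prime for $i\neq j$, and $a=c\,s_1^{k_1}s_2^{k_2}\cdots s_n^{k_n}$. Then: (ii) implies (i); (ii) and (iii) are equivalent; (iv) and (v) are equivalent; (v) implies (vi); and (vi) and (vii) are equivalent.
   Context: All rings are commutative with identity. $R^{\ast}$ denotes the set of invertible elements of $R$. For $a,b\in R$, $a\sim b$ means $a$ and $b$ are associated, and $a\mid b$ means $a$ divides $b$. Elements $a,b$ are relatively prime if they have no common non-invertible divisor. An element $a\in R$ is square-free if it cannot be written as $a=b^2c$ with $b\in R\setminus R^{\ast}$ and $c\in R$; $\operatorname{Sqf} R$ denotes the set of square-free elements of $R$. *)

(* Defs.v *)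
From mathcomp Require Import all_boot all_order all_algebra.
Set Implicit Arguments. Unset Strict Implicit. Unset Printing Implicit Defensive.
Import GRing.Theory.
Local Open Scope ring_scope.

Definition rdvd (R : comUnitRingType) (a b : R) : Prop := exists c : R, b = a * c.

Definition rassoc (R : comUnitRingType) (a b : R) : Prop := rdvd a b /\ rdvd b a.

Definition rcoprime (R : comUnitRingType) (a b : R) : Prop :=
  forall d : R, rdvd d a -> rdvd d b -> d \is a GRing.unit.

Definition sqfree (R : comUnitRingType) (a : R) : Prop :=
  ~ (exists b c : R, b \isn't a GRing.unit /\ a = b ^+ 2 * c).

(* Main.v *)
Require Import Defs.
From mathcomp Require Import all_boot all_order all_algebra.
From mathcomp Require Import zify ring.
From Stdlib Require Import Classical.
Set Implicit Arguments. Unset Strict Implicit. Unset Printing Implicit Defensive.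
Import GRing.Theory.
Local Open Scope ring_scope.


Lemma rdvd_refl (R : comUnitRingType) (x : R) : rdvd x x.
Proof. by exists 1; rewrite mulr1. Qed.

Lemma rdvd_trans (R : comUnitRingType) (x y z : R) : rdvd x y -> rdvd y z -> rdvd x z.
Proof. by move=> [a ->] [b ->]; exists (a * b); rewrite mulrA. Qed.

Lemma rdvd_unitl (R : comUnitRingType) (c x y : R) : c \is a GRing.unit -> rdvd x y -> rdvd (c * x) y.
Proof. by move=> cu [a ->]; exists (c^-1 * a); rewrite mulrACA mulrV // mul1r. Qed.

Lemma rdvd_unitr (R : comUnitRingType) (c x y : R) : c \is a GRing.unit -> rdvd x (c * y) -> rdvd x y.
Proof. by move=> cu [a e]; exists (c^-1 * a); rewrite mulrCA -e mulrA mulVr // mul1r. Qed.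

Lemma rdvd1_unit (R : comUnitRingType) (d : R) : rdvd d 1 -> d \is a GRing.unit.
Proof. by move=> [a e]; have := unitr1 R; rewrite e unitrM => /andP[]. Qed.

Lemma unit_sqfree (R : comUnitRingType) (u : R) : u \is a GRing.unit -> sqfree u.
Proof.
move=> uu [b [c [bn e]]]; move: uu; rewrite e expr2 -mulrA unitrM => /andP[bu _].
by rewrite bu in bn.
Qed.

Lemma sqfree1 (R : comUnitRingType) : sqfree (1 : R).
Proof. exact/unit_sqfree/unitr1. Qed.

Lemma sqfree_dvd (R : comUnitRingType) (d x : R) : rdvd d x -> sqfree x -> sqfree d.
Proof.
move=> [y ->] sx [b [c [bn e]]]; apply: sx; exists b, (c * y); split=> //.
by rewrite e mulrA.
Qed.

Lemma sqfree_mulu (R : comUnitRingType) (c x : R) : c \is a GRing.unit -> sqfree x -> sqfree (c * x).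
Proof.
move=> cu sx; apply: (sqfree_dvd _ sx); exists c^-1.
by rewrite mulrC mulrA mulVr // mul1r.
Qed.

Lemma rcoprime_sym (R : comUnitRingType) (x y : R) : rcoprime x y -> rcoprime y x.
Proof. by move=> h d h1 h2; apply: h. Qed.

Lemma rcoprime_unitl (R : comUnitRingType) (u y : R) : u \is a GRing.unit -> rcoprime u y.
Proof.
move=> uu d [a e] _; have : (d * a) \is a GRing.unit by rewrite -e.
by rewrite unitrM => /andP[].
Qed.

Lemma rcoprime_mulu (R : comUnitRingType) (c x y : R) : c \is a GRing.unit -> rcoprime x y -> rcoprime (c * x) y.
Proof. by move=> cu h d h1 h2; apply: h => //; apply: rdvd_unitr h1. Qed.

Lemma sqfree_assoc (R : comUnitRingType) (s t : R) : sqfree s -> rdvd s t -> rdvd t s ->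
  exists u, u \is a GRing.unit /\ t = s * u.
Proof.
move=> ss [x ex] [y ey]; exists x; split=> //.
have e2 : s = s * (x * y) by rewrite mulrA -ex.
case xyu: (x * y \is a GRing.unit); first by move: xyu; rewrite unitrM => /andP[].
exfalso; apply: ss; exists (x * y), s; split; first by rewrite xyu.
by rewrite expr2 mulrC [s * (_ * _)]mulrA -!e2.
Qed.

Lemma sqfree_coprime (R : comUnitRingType) (x y : R) : sqfree (x * y) -> rcoprime x y.
Proof.
move=> sxy d [a ea] [b eb]; subst x y; case du: (d \is a GRing.unit) => //.
exfalso; apply: sxy; exists d, (a * b); split; first by rewrite du.
by rewrite expr2 mulrACA.
Qed.

Lemma prod_unit (R : comUnitRingType) (I : Type) (r : seq I) (P : pred I) (F : I -> R) :
  (forall i, P i -> F i \is a GRing.unit) -> \prod_(i <- r | P i) F i \is a GRing.unit.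
Proof.
move=> h; apply: (big_ind (fun x => x \is a GRing.unit)) => //; first exact: unitr1.
by move=> x y hx hy; rewrite unitrM hx hy.
Qed.

Lemma sparse (R : comUnitRingType) (s : nat -> R) (k e : nat -> nat) (n lo m : nat) :
 (forall i j, (1 <= i <= n)%N -> (1 <= j <= n)%N -> k i = k j -> i = j) ->
 (forall i, (1 <= i <= n)%N -> (lo <= k i < m)%N) ->
 \prod_(lo <= j < m) (\prod_(1 <= i < n.+1 | k i == j) s i) ^+ e j
   = \prod_(1 <= i < n.+1) s i ^+ e (k i).
Proof.
move=> inj rng.
transitivity (\prod_(lo <= j < m) \prod_(1 <= i < n.+1) (if k i == j then s i ^+ e (k i) else 1)).
  apply: eq_bigr => j _; rewrite -prodrXl big_mkcond; apply: eq_bigr => i _.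
  by case: eqP => // ->.
rewrite exchange_big_nat /=; apply: eq_big_nat => i hi.
have hk := rng i hi.
rewrite (bigD1_seq (k i)) ?mem_index_iota ?iota_uniq //= eqxx big1 ?mulr1 //.
by move=> j; rewrite eq_sym => /negbTE ->.
Qed.


Lemma sparse_cases (R : comUnitRingType) (s : nat -> R) (k : nat -> nat) (n j : nat) :
 (forall i j, (1 <= i <= n)%N -> (1 <= j <= n)%N -> k i = k j -> i = j) ->
 (\prod_(1 <= i < n.+1 | k i == j) s i = 1) \/
 exists i, [/\ (1 <= i <= n)%N, k i = j & \prod_(1 <= i < n.+1 | k i == j) s i = s i].
Proof.
move=> inj.
case: (boolP (has (fun i => k i == j) (index_iota 1 n.+1))) => h; last by left; rewrite big_hasC.
right; case/hasP: h => i; rewrite mem_index_iota => hi /eqP kij.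
exists i; split=> //.
rewrite big_mkcond (bigD1_seq i) ?mem_index_iota ?iota_uniq //= kij eqxx big1_seq ?mulr1 //.
move=> i' /andP[ne]; rewrite mem_index_iota => hi'.
case: eqP => // e; exfalso; move: ne; rewrite (inj i' i) ?eqxx //; congruence.
Qed.


Lemma absorb (R : comUnitRingType) (c : R) (T : nat -> R) (e : nat -> nat) (lo m : nat) :
  (lo < m)%N -> e lo = 1%N ->
  \prod_(lo <= j < m) (if j == lo then c * T j else T j) ^+ e j = c * \prod_(lo <= j < m) T j ^+ e j.
Proof.
move=> hm he; rewrite (big_ltn hm) (big_ltn hm) eqxx he !expr1 -mulrA; congr (_ * (_ * _)).
by apply: eq_big_nat => j /andP[hj _]; rewrite gtn_eqF.
Qed.

Lemma d2s (R : comUnitRingType) (t : nat -> R) (e : nat -> nat) (lo m : nat) :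
 exists c, c \is a GRing.unit /\
 \prod_(lo <= j < m) t j ^+ e j = c *
   \prod_(1 <= i < (size [seq j <- index_iota lo m | t j \isn't a GRing.unit]).+1)
      t (nth 0%N [seq j <- index_iota lo m | t j \isn't a GRing.unit] i.-1)
      ^+ e (nth 0%N [seq j <- index_iota lo m | t j \isn't a GRing.unit] i.-1).
Proof.
exists (\prod_(lo <= j < m | t j \is a GRing.unit) t j ^+ e j); split.
  by apply: prod_unit => j hj; rewrite unitrX.
rewrite (bigID (fun j => t j \is a GRing.unit)) /=; congr (_ * _).
by rewrite -big_filter (big_nth 0%N) big_add1 /=.
Qed.


Lemma strict_mono (k : nat -> nat) (n : nat) :
  (forall i, (1 <= i < n)%N -> (k i < k i.+1)%N) ->
  forall i j, (1 <= i)%N -> (i < j)%N -> (j <= n)%N -> (k i < k j)%N.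
Proof.
move=> h i j hi; elim: j => // j IH hij hj.
have Hj : (k j < k j.+1)%N by apply: h; lia.
case: (ltnP i j) => [lt|ge].
  by apply: ltn_trans (IH lt (ltnW hj)) Hj.
by have -> : i = j by lia.
Qed.

Lemma strict_inj (k : nat -> nat) (n : nat) :
  (forall i, (1 <= i < n)%N -> (k i < k i.+1)%N) ->
  forall i j, (1 <= i <= n)%N -> (1 <= j <= n)%N -> k i = k j -> i = j.
Proof.
move=> h i j hi hj e.
case: (ltngtP i j) => // lt; exfalso.
  have H : (1 <= i)%N /\ (j <= n)%N by lia.
  by have := strict_mono h (proj1 H) lt (proj2 H); rewrite e ltnn.
have H : (1 <= j)%N /\ (i <= n)%N by lia.
by have := strict_mono h (proj1 H) lt (proj2 H); rewrite e ltnn.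
Qed.

Lemma strict_le (k : nat -> nat) (n : nat) :
  (forall i, (1 <= i < n)%N -> (k i < k i.+1)%N) ->
  forall i, (1 <= i <= n)%N -> (k 1 <= k i <= k n)%N.
Proof.
move=> h i hi; apply/andP; split.
  case: (ltnP 1 i) => lt; first by apply/ltnW/(strict_mono h) => //; lia.
  by have -> : i = 1%N by lia.
case: (ltnP i n) => lt; first by apply/ltnW/(strict_mono h) => //; lia.
by have -> : i = n by lia.
Qed.

Lemma sorted_nth_lt (S : seq nat) (i j : nat) : sorted ltn S -> (i < j < size S)%N ->
  (nth 0 S i < nth 0 S j)%N.
Proof.
move=> so /andP[ij js]; apply: (sorted_ltn_nth ltn_trans) => //.
by rewrite inE (ltn_trans ij js).
Qed.

Lemma sparse_sqfree (R : comUnitRingType) (s : nat -> R) (k : nat -> nat) (n j : nat) :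
 (forall i j, (1 <= i <= n)%N -> (1 <= j <= n)%N -> k i = k j -> i = j) ->
 (forall i, (1 <= i <= n)%N -> sqfree (s i)) ->
 sqfree (\prod_(1 <= i < n.+1 | k i == j) s i).
Proof.
move=> inj sq; case: (sparse_cases s j inj) => [->|[i [hi _ ->]]]; [exact: sqfree1 | exact: sq].
Qed.


Lemma p21 (R : comUnitRingType) (a : R) :
  (exists (n : nat) (s : nat -> R),
      (forall i, (i <= n)%N -> sqfree (s i)) /\
      a = \prod_(0 <= i < n.+1) s i ^+ (2 ^ i)%N) ->
  exists b c : R, sqfree c /\ a = b ^+ 2 * c.
Proof.
move=> [n [s [sq ->]]].
exists (\prod_(0 <= i < n) s i.+1 ^+ (2 ^ i)%N), (s 0%N); split; first exact: sq.
rewrite big_ltn // big_add1 /= mulrC -prodrXl; congr (_ * _).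
by apply: eq_bigr => i _; rewrite expnSr exprM.
Qed.

Lemma p23 (R : comUnitRingType) (a : R) (hau : a \isn't a GRing.unit) :
  (exists (n : nat) (s : nat -> R),
      (forall i, (i <= n)%N -> sqfree (s i)) /\
      a = \prod_(0 <= i < n.+1) s i ^+ (2 ^ i)%N) ->
  exists (n : nat) (s : nat -> R) (k : nat -> nat) (c : R),
      (1 <= n)%N /\
      (forall i, (1 <= i <= n)%N -> sqfree (s i) /\ s i \isn't a GRing.unit) /\
      (forall i, (1 <= i < n)%N -> (k i < k i.+1)%N) /\
      c \is a GRing.unit /\
      a = c * \prod_(1 <= i < n.+1) s i ^+ (2 ^ k i)%N.
Proof.
move=> [n [s [sq ea]]].
have [c [cu e]] := d2s s (fun i => 2 ^ i)%N 0 n.+1.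
set S := [seq _ <- _ | _] in e.
have so : sorted ltn S by apply: sorted_filter; [exact: ltn_trans | exact: iota_ltn_sorted].
have inS : forall i, (1 <= i <= size S)%N -> nth 0%N S i.-1 \in S.
  by move=> i /andP[h1 h2]; apply: mem_nth; rewrite prednK.
exists (size S), (fun i => s (nth 0%N S i.-1)), (fun i => nth 0%N S i.-1), c.
split.
  case: (posnP (size S)) => [sz0|]; last by [].
  by move: hau; rewrite ea e sz0 big_geq // mulr1 cu.
split.
  move=> i /inS; rewrite mem_filter mem_index_iota => /andP[nu hr]; split => //.
  by apply: sq; lia.
split.
  by move=> i /andP[h1 h2] /=; apply: sorted_nth_lt => //; rewrite h2 andbT prednK.
by split => //; rewrite ea e.
Qed.

Lemma p32 (R : comUnitRingType) (a : R) :
  (exists (n : nat) (s : nat -> R) (k : nat -> nat) (c : R),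
      (1 <= n)%N /\
      (forall i, (1 <= i <= n)%N -> sqfree (s i) /\ s i \isn't a GRing.unit) /\
      (forall i, (1 <= i < n)%N -> (k i < k i.+1)%N) /\
      c \is a GRing.unit /\
      a = c * \prod_(1 <= i < n.+1) s i ^+ (2 ^ k i)%N) ->
  exists (n : nat) (s : nat -> R),
      (forall i, (i <= n)%N -> sqfree (s i)) /\
      a = \prod_(0 <= i < n.+1) s i ^+ (2 ^ i)%N.
Proof.
move=> [n [s [k [c [n1 [sq [mono [cu ea]]]]]]]].
have inj := strict_inj mono; have le := strict_le mono.
have sq' : forall i, (1 <= i <= n)%N -> sqfree (s i) by move=> i /sq [].
pose T j := \prod_(1 <= i < n.+1 | k i == j) s i.
exists (k n), (fun j => if j == 0%N then c * T j else T j); split.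
  move=> j _; have sT : sqfree (T j) by apply: sparse_sqfree.
  by case: ifP => _ //; apply: sqfree_mulu.
rewrite (@absorb R c T (fun j => 2 ^ j)%N 0 (k n).+1) // /T.
rewrite (@sparse R s k (fun j => 2 ^ j)%N n 0 (k n).+1) -?ea // => i hi.
by have := le i hi; lia.
Qed.


Lemma p67 (R : comUnitRingType) (a : R) (hau : a \isn't a GRing.unit) :
  (exists (n : nat) (s : nat -> R),
      (1 <= n)%N /\
      (forall i, (1 <= i <= n)%N -> sqfree (s i)) /\
      (forall i j, (1 <= i <= n)%N -> (1 <= j <= n)%N -> i != j -> rcoprime (s i) (s j)) /\
      a = \prod_(1 <= i < n.+1) s i ^+ i) ->
  exists (n : nat) (s : nat -> R) (k : nat -> nat) (c : R),
      (1 <= n)%N /\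
      (forall i, (1 <= i <= n)%N -> sqfree (s i) /\ s i \isn't a GRing.unit) /\
      (1 <= k 1)%N /\
      (forall i, (1 <= i < n)%N -> (k i < k i.+1)%N) /\
      (forall i j, (1 <= i <= n)%N -> (1 <= j <= n)%N -> i != j -> rcoprime (s i) (s j)) /\
      c \is a GRing.unit /\
      a = c * \prod_(1 <= i < n.+1) s i ^+ k i.
Proof.
move=> [n [s [n1 [sq [cop ea]]]]].
have [c [cu e]] := @d2s R s (fun i => i) 1 n.+1.
set S := [seq _ <- _ | _] in e.
have so : sorted ltn S by apply: sorted_filter; [exact: ltn_trans | exact: iota_ltn_sorted].
have uS : uniq S by apply: filter_uniq; exact: iota_uniq.
have inS : forall i, (1 <= i <= size S)%N -> nth 0%N S i.-1 \in S.
  by move=> i /andP[h1 h2]; apply: mem_nth; rewrite prednK.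
have inS' : forall i, (1 <= i <= size S)%N ->
    s (nth 0%N S i.-1) \isn't a GRing.unit /\ (1 <= nth 0%N S i.-1 <= n)%N.
  move=> i /inS; rewrite mem_filter mem_index_iota => /andP[nu hr]; split => //; lia.
have sz : (1 <= size S)%N.
  case: (posnP (size S)) => [sz0|]; last by [].
  by move: hau; rewrite ea e sz0 big_geq // mulr1 cu.
exists (size S), (fun i => s (nth 0%N S i.-1)), (fun i => nth 0%N S i.-1), c.
split => //.
split.
  move=> i hi; have [nu hr] := inS' i hi; split => //; exact: sq.
split.
  by have [_ hr] := inS' 1%N (sz); move: hr => /andP[].
split.
  by move=> i /andP[h1 h2] /=; apply: sorted_nth_lt => //; rewrite h2 andbT prednK.
split.
  move=> i j hi hj ne; have [_ hri] := inS' i hi; have [_ hrj] := inS' j hj.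
  have hi1 : (i.-1 < size S)%N by case/andP: hi => h1 h2; rewrite prednK.
  have hj1 : (j.-1 < size S)%N by case/andP: hj => h1 h2; rewrite prednK.
  apply: cop => //; rewrite nth_uniq //.
  move: ne; apply: contra; move=> /eqP E; apply/eqP.
  by clear hri hrj hi1 hj1; move: hi hj E; case: i => // i; case: j => // j /= _ _ ->.
by split => //; rewrite ea e.
Qed.

Lemma sparse_coprime (R : comUnitRingType) (s : nat -> R) (k : nat -> nat) (n j j' : nat) :
 (forall i j, (1 <= i <= n)%N -> (1 <= j <= n)%N -> k i = k j -> i = j) ->
 (forall i j, (1 <= i <= n)%N -> (1 <= j <= n)%N -> i != j -> rcoprime (s i) (s j)) ->
 j != j' ->
 rcoprime (\prod_(1 <= i < n.+1 | k i == j) s i) (\prod_(1 <= i < n.+1 | k i == j') s i).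
Proof.
move=> inj cop ne.
case: (@sparse_cases R s k n j inj) => [->|[i [hi ki ->]]]; first exact/rcoprime_unitl/unitr1.
case: (@sparse_cases R s k n j' inj) => [->|[i' [hi' ki' ->]]].
  exact/rcoprime_sym/rcoprime_unitl/unitr1.
apply: cop => //; move: ne; apply: contra; move=> /eqP E; apply/eqP; by rewrite -ki -ki' E.
Qed.

Lemma p76 (R : comUnitRingType) (a : R) :
  (exists (n : nat) (s : nat -> R) (k : nat -> nat) (c : R),
      (1 <= n)%N /\
      (forall i, (1 <= i <= n)%N -> sqfree (s i) /\ s i \isn't a GRing.unit) /\
      (1 <= k 1)%N /\
      (forall i, (1 <= i < n)%N -> (k i < k i.+1)%N) /\
      (forall i j, (1 <= i <= n)%N -> (1 <= j <= n)%N -> i != j -> rcoprime (s i) (s j)) /\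
      c \is a GRing.unit /\
      a = c * \prod_(1 <= i < n.+1) s i ^+ k i) ->
  exists (n : nat) (s : nat -> R),
      (1 <= n)%N /\
      (forall i, (1 <= i <= n)%N -> sqfree (s i)) /\
      (forall i j, (1 <= i <= n)%N -> (1 <= j <= n)%N -> i != j -> rcoprime (s i) (s j)) /\
      a = \prod_(1 <= i < n.+1) s i ^+ i.
Proof.
move=> [n [s [k [c [n1 [sq [k1 [mono [cop [cu ea]]]]]]]]]].
have inj := strict_inj mono; have le := strict_le mono.
have sq' : forall i, (1 <= i <= n)%N -> sqfree (s i) by move=> i /sq [].
pose T j := \prod_(1 <= i < n.+1 | k i == j) s i.
have kn1 : (1 <= k n)%N by have := le n; lia.
exists (k n), (fun j => if j == 1%N then c * T j else T j); split => //.
split.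
  move=> j _; have sT : sqfree (T j) by apply: sparse_sqfree.
  by case: ifP => _ //; apply: sqfree_mulu.
split.
  move=> j j' _ _ ne; have cT : rcoprime (T j) (T j') by apply: sparse_coprime.
  case: ifP => _; case: ifP => _ //.
  - by apply: rcoprime_mulu => //; apply/rcoprime_sym/rcoprime_mulu => //; apply: rcoprime_sym.
  - exact: rcoprime_mulu.
  - by apply/rcoprime_sym/rcoprime_mulu => //; apply: rcoprime_sym.
rewrite (@absorb R c T (fun j => j) 1 (k n).+1) // /T.
rewrite (@sparse R s k (fun j => j) n 1 (k n).+1) -?ea // => i hi.
by have := le i hi; lia.
Qed.


Lemma rdvd_unit (R : comUnitRingType) (d u : R) : rdvd d u -> u \is a GRing.unit -> d \is a GRing.unit.
Proof. by move=> [x ->]; rewrite unitrM => /andP[]. Qed.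

Lemma rassoc_trans (R : comUnitRingType) (x y z : R) : rassoc x y -> rassoc y z -> rassoc x z.
Proof. by move=> [h1 h2] [h3 h4]; split; [apply: rdvd_trans h3 | apply: rdvd_trans h2]. Qed.

Lemma rassoc_sym (R : comUnitRingType) (x y : R) : rassoc x y -> rassoc y x.
Proof. by move=> [h1 h2]; split. Qed.

Definition C5p (R : comUnitRingType) (N : nat) (t : nat -> R) (k : nat -> nat) (c : R) :=
  [/\ (1 <= N)%N,
      (forall i, (1 <= i <= N)%N -> sqfree (t i) /\ t i \isn't a GRing.unit),
      (forall i, (1 <= i <= N)%N -> (1 <= k i)%N),
      (forall i, (1 <= i < N)%N -> rdvd (t i) (t i.+1) /\ ~ rassoc (t i) (t i.+1)) &
      c \is a GRing.unit].

Lemma c45_ind (R : comUnitRingType) (s : nat -> R) (n : nat) :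
  (forall i, (1 <= i <= n)%N -> sqfree (s i)) ->
  (forall i, (1 <= i < n)%N -> rdvd (s i) (s i.+1)) ->
  (\prod_(1 <= i < n.+1) s i \is a GRing.unit) \/
  exists N t k c, [/\ C5p N t k c, rassoc (t N) (s n) &
     \prod_(1 <= i < n.+1) s i = c * \prod_(1 <= i < N.+1) t i ^+ k i].
Proof.
elim: n => [|n IH] sq ch; first by left; rewrite big_geq // unitr1.
have sq' : forall i, (1 <= i <= n)%N -> sqfree (s i) by move=> i hi; apply: sq; lia.
have ch' : forall i, (1 <= i < n)%N -> rdvd (s i) (s i.+1) by move=> i hi; apply: ch; lia.
rewrite big_nat_recr //=.
have sqn1 : sqfree (s n.+1) by apply: sq; lia.
have single : forall P, P \is a GRing.unit ->
   (P * s n.+1 \is a GRing.unit) \/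
   exists N t k c, [/\ C5p N t k c, rassoc (t N) (s n.+1) &
     P * s n.+1 = c * \prod_(1 <= i < N.+1) t i ^+ k i].
  move=> P Pu; case su: (s n.+1 \is a GRing.unit); first by left; rewrite unitrM Pu su.
  right; exists 1%N, (fun _ => s n.+1), (fun _ => 1%N), P; split.
  - split => //; first by move=> i _; rewrite su.
    by move=> i; lia.
  - by split; apply: rdvd_refl.
  - by rewrite big_nat1 expr1.
case: (posnP n) => [n0|npos].
  by subst n; rewrite big_geq //; apply: single; exact: unitr1.
case: (IH sq' ch') => [Pu|[N [t [k [c [[N1 tsq k1 tch cu] [a1 a2] e]]]]]]; first exact: single.
right.
have dn : rdvd (s n) (s n.+1) by apply: ch; lia.
have [tNsq tNnu] : sqfree (t N) /\ t N \isn't a GRing.unit by apply: tsq; lia.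
case: (classic (rassoc (t N) (s n.+1))) => [ass|nass].
  have [h1 h2] := ass.
  have [u [uu eu]] := sqfree_assoc tNsq h1 h2.
  exists N, t, (fun i => if i == N then (k N).+1 else k i), (c * u); split => //.
    split => //; last by rewrite unitrM cu uu.
    by move=> i hi; case: ifP => _ //; apply: k1.
  rewrite e eu (big_nat_recr N) //= (big_nat_recr N) //= eqxx.
  rewrite (@eq_big_nat _ _ _ 1 N (fun i => t i ^+ (if i == N then (k N).+1 else k i))
     (fun i => t i ^+ k i)); last by move=> i hi; rewrite ltn_eqF //; lia.
  by rewrite exprSr; ring.
exists N.+1, (fun i => if i == N.+1 then s n.+1 else t i),
  (fun i => if i == N.+1 then 1%N else k i), c; split.
- split => //.
  + move=> i hi; case: ifP => [_|/negbT ne]; last by apply: tsq; lia.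
    split => //; apply: contra tNnu => su.
    by apply: (rdvd_unit (rdvd_trans a1 dn)).
  + by move=> i hi; case: ifP => // /negbT ne; apply: k1; lia.
  + move=> i hi; rewrite (ltn_eqF (_ : i < N.+1)%N); last by lia.
    case: ifP => [/eqP E|/negbT ne].
      have -> : i = N by lia.
      split; first exact: rdvd_trans a1 dn.
      exact: nass.
    by apply: tch; lia.
- by rewrite /= eqxx; split; apply: rdvd_refl.
- rewrite e [in RHS]big_nat_recr //= eqxx expr1 -mulrA; congr (_ * (_ * _)).
  by apply: eq_big_nat => i hi; rewrite ltn_eqF //; lia.
Qed.

Lemma p45 (R : comUnitRingType) (a : R) (hau : a \isn't a GRing.unit) :
  (exists (n : nat) (s : nat -> R),
      (1 <= n)%N /\
      (forall i, (1 <= i <= n)%N -> sqfree (s i)) /\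
      (forall i, (1 <= i < n)%N -> rdvd (s i) (s i.+1)) /\
      a = \prod_(1 <= i < n.+1) s i) ->
  exists (n : nat) (s : nat -> R) (k : nat -> nat) (c : R),
      (1 <= n)%N /\
      (forall i, (1 <= i <= n)%N -> sqfree (s i) /\ s i \isn't a GRing.unit) /\
      (forall i, (1 <= i <= n)%N -> (1 <= k i)%N) /\
      (forall i, (1 <= i < n)%N -> rdvd (s i) (s i.+1) /\ ~ rassoc (s i) (s i.+1)) /\
      c \is a GRing.unit /\
      a = c * \prod_(1 <= i < n.+1) s i ^+ k i.
Proof.
move=> [n [s [n1 [sq [ch ea]]]]].
case: (c45_ind sq ch) => [Pu|[N [t [k [c [[N1 tsq k1 tch cu] _ e]]]]]].
  by move: hau; rewrite ea Pu.
by exists N, t, k, c; do 4!split => //; rewrite ea e.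
Qed.

Definition chainp (R : comUnitRingType) (n : nat) (s : nat -> R) :=
  (forall i, (1 <= i <= n)%N -> sqfree (s i)) /\
  (forall i, (1 <= i < n)%N -> rdvd (s i) (s i.+1)).

Lemma chain_app (R : comUnitRingType) (n : nat) (s : nat -> R) (x : R) :
  chainp n s -> ((1 <= n)%N -> rdvd (s n) x) -> sqfree x ->
  chainp n.+1 (fun i => if i == n.+1 then x else s i) /\
  \prod_(1 <= i < n.+2) (if i == n.+1 then x else s i) = \prod_(1 <= i < n.+1) s i * x.
Proof.
move=> [sq ch] dx sx; split; first split.
- move=> i hi; case: ifP => // /negbT ne; apply: sq; lia.
- move=> i hi; rewrite (ltn_eqF (_ : i < n.+1)%N); last by lia.
  case: ifP => [/eqP E|/negbT ne].
    have -> : i = n by lia.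
    by apply: dx; lia.
  by apply: ch; lia.
- rewrite big_nat_recr //= eqxx; congr (_ * _).
  by apply: eq_big_nat => i hi; rewrite ltn_eqF //; lia.
Qed.

Lemma chain_rep (R : comUnitRingType) (x : R) (m : nat) : forall (n : nat) (s : nat -> R),
  chainp n s -> ((1 <= n)%N -> rdvd (s n) x) -> sqfree x ->
  exists n' s', [/\ chainp n' s', (1 <= n')%N, s' n' = x &
    \prod_(1 <= i < n'.+1) s' i = \prod_(1 <= i < n.+1) s i * x ^+ m.+1].
Proof.
elim: m => [|m IH] n s cs dx sx.
  have [c1 e1] := chain_app cs dx sx.
  by exists n.+1, (fun i => if i == n.+1 then x else s i); split => //; rewrite ?eqxx // e1 expr1.
have [c1 e1] := chain_app cs dx sx.
have [n' [s' [c' n1 sn e']]] := IH _ _ c1 (fun _ => ltac:(rewrite /= eqxx; exact: rdvd_refl)) sx.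
by exists n', s'; split => //; rewrite e' e1 [x ^+ m.+2]exprS mulrA.
Qed.

Lemma c54_ind (R : comUnitRingType) (t : nat -> R) (k : nat -> nat) (N : nat) :
  (forall i, (1 <= i <= N)%N -> sqfree (t i)) ->
  (forall i, (1 <= i < N)%N -> rdvd (t i) (t i.+1)) ->
  (forall i, (1 <= i <= N)%N -> (1 <= k i)%N) ->
  exists n s, [/\ chainp n s, (N = 0%N -> n = 0%N), ((1 <= N)%N -> (1 <= n)%N /\ s n = t N) &
     \prod_(1 <= i < n.+1) s i = \prod_(1 <= i < N.+1) t i ^+ k i].
Proof.
elim: N => [|N IH] sq ch k1.
  exists 0%N, t; split.
  - by rewrite /chainp; split => i; lia.
  - by [].
  - by [].
  - by rewrite !big_geq.
have [n [s [cs z nz e]]] : exists n s, [/\ chainp n s, (N = 0%N -> n = 0%N),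
    ((1 <= N)%N -> (1 <= n)%N /\ s n = t N) &
     \prod_(1 <= i < n.+1) s i = \prod_(1 <= i < N.+1) t i ^+ k i].
  apply: IH => i hi; [apply: sq | apply: ch | apply: k1]; lia.
have kp : (0 < k N.+1)%N by apply: k1; lia.
have dx : (1 <= n)%N -> rdvd (s n) (t N.+1).
  move=> n1; case: (posnP N) => [N0|Np]; first by move: n1; rewrite z.
  by have [_ ->] := nz Np; apply: ch; lia.
have [n' [s' [c' n1 sn e']]] := chain_rep (k N.+1).-1 cs dx (sq N.+1 ltac:(lia)).
exists n', s'; split => //.
by rewrite e' e prednK // [in RHS]big_nat_recr.
Qed.

Lemma p54 (R : comUnitRingType) (a : R) :
  (exists (n : nat) (s : nat -> R) (k : nat -> nat) (c : R),
      (1 <= n)%N /\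
      (forall i, (1 <= i <= n)%N -> sqfree (s i) /\ s i \isn't a GRing.unit) /\
      (forall i, (1 <= i <= n)%N -> (1 <= k i)%N) /\
      (forall i, (1 <= i < n)%N -> rdvd (s i) (s i.+1) /\ ~ rassoc (s i) (s i.+1)) /\
      c \is a GRing.unit /\
      a = c * \prod_(1 <= i < n.+1) s i ^+ k i) ->
  exists (n : nat) (s : nat -> R),
      (1 <= n)%N /\
      (forall i, (1 <= i <= n)%N -> sqfree (s i)) /\
      (forall i, (1 <= i < n)%N -> rdvd (s i) (s i.+1)) /\
      a = \prod_(1 <= i < n.+1) s i.
Proof.
move=> [N [t [k [c [N1 [tsq [k1 [tch [cu ea]]]]]]]]].
have [n [s [[sq ch] _ nz e]]] := @c54_ind R t k N (fun i hi => (tsq i hi).1)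
   (fun i hi => (tch i hi).1) k1.
have [n1 _] := nz N1.
exists n, (fun i => if i == 1%N then c * s i else s i); split => //.
split.
  by move=> i hi; case: ifP => _; [apply: sqfree_mulu => //|]; apply: sq.
split.
  move=> i hi; rewrite (gtn_eqF (_ : 1 < i.+1)%N); last by lia.
  case: ifP => _; last by apply: ch.
  by apply: rdvd_unitl => //; apply: ch.
rewrite ea -e (big_ltn (_ : 1 < n.+1)%N) // (big_ltn (_ : 1 < n.+1)%N) // eqxx -mulrA.
congr (_ * (_ * _)); apply: eq_big_nat => i hi; rewrite gtn_eqF //; lia.
Qed.

Lemma upd (R : comUnitRingType) (u : nat -> R) (x : R) (p lo m : nat) (e : nat -> nat) :
  (lo <= p < m)%N -> u p = 1 ->
  \prod_(lo <= j < m) (if j == p then x else u j) ^+ e j = x ^+ e p * \prod_(lo <= j < m) u j ^+ e j.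
Proof.
move=> hp up.
rewrite (bigD1_seq p) ?mem_index_iota ?iota_uniq //= eqxx.
rewrite [in RHS](bigD1_seq p) ?mem_index_iota ?iota_uniq //= up expr1n mul1r.
by congr (_ * _); apply: eq_bigr => j /negbTE ->.
Qed.

Lemma rcoprime_dvdl (R : comUnitRingType) (a b c : R) : rdvd a b -> rcoprime b c -> rcoprime a c.
Proof. by move=> h cop d h1 h2; apply: cop => //; apply: rdvd_trans h. Qed.

Lemma c56_ind (R : comUnitRingType) (t : nat -> R) (N : nat) : forall (k : nat -> nat),
  (1 <= N)%N ->
  (forall i, (1 <= i < N)%N -> rdvd (t i) (t i.+1)) ->
  sqfree (t N) ->
  (forall i, (1 <= i <= N)%N -> (1 <= k i)%N) ->
  exists M u, [/\ (forall j, (1 <= j <= M)%N -> sqfree (u j) /\ rdvd (u j) (t N)),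
    (forall i j, (1 <= i <= M)%N -> (1 <= j <= M)%N -> i != j -> rcoprime (u i) (u j)),
    (forall j, (1 <= j < k N)%N -> u j = 1),
    (k N <= M)%N &
    \prod_(1 <= j < M.+1) u j ^+ j = \prod_(1 <= i < N.+1) t i ^+ k i].
Proof.
elim: N => [|N IH] k // _ ch sqN k1.
case: (posnP N) => [N0|Np].
  subst N.
  have kp : (1 <= k 1)%N by apply: k1.
  exists (k 1%N), (fun j => if j == k 1%N then t 1%N else 1); split.
  - move=> j _; case: ifP => _; first by split => //; apply: rdvd_refl.
    by split; [exact: sqfree1 | exists (t 1%N); rewrite mul1r].
  - move=> i j _ _ ne; case: ifP => [/eqP Ei|_]; last exact/rcoprime_unitl/unitr1.
    rewrite Ei eq_sym in ne; rewrite (negbTE ne); exact/rcoprime_sym/rcoprime_unitl/unitr1.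
  - by move=> j hj; rewrite ltn_eqF //; lia.
  - by [].
  - rewrite (@upd R (fun _ => 1) (t 1%N) (k 1%N) 1 (k 1%N).+1 (fun j => j)) //; last by lia.
    by rewrite big1 ?mulr1 ?big_nat1 // => j _; rewrite expr1n.
have [x ex] : rdvd (t N) (t N.+1) by apply: ch; lia.
pose k' i := if i == N then (k N + k N.+1)%N else k i.
have sqtN : sqfree (t N) by apply: sqfree_dvd sqN; exists x.
have kN1 : (1 <= k N)%N by apply: k1; lia.
have kN2 : (1 <= k N.+1)%N by apply: k1; lia.
have k1' : forall i, (1 <= i <= N)%N -> (1 <= k' i)%N.
  by move=> i hi; rewrite /k'; case: ifP => _; [lia | apply: k1; lia].
have [M [u [usq ucop u1 kM e]]] := IH k' Np (fun i hi => ch i ltac:(lia)) sqtN k1'.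
have k'N : k' N = (k N + k N.+1)%N by rewrite /k' eqxx.
rewrite k'N in u1 kM.
have cop0 : rcoprime (t N) x by apply: sqfree_coprime; rewrite -ex.
have xd : rdvd x (t N.+1) by exists (t N); rewrite ex mulrC.
exists M, (fun j => if j == k N.+1 then x else u j); split.
- move=> j hj; case: ifP => _; first by split => //; apply: sqfree_dvd sqN.
  have [s1 s2] := usq j hj; split => //; apply: rdvd_trans s2 _; exists x; exact: ex.
- move=> i j hi hj ne.
  case: ifP => [/eqP Ei|_]; case: ifP => [/eqP Ej|_].
  + by move: ne; rewrite Ei Ej eqxx.
  + apply: rcoprime_sym; apply: (rcoprime_dvdl (usq j hj).2); exact: cop0.
  + apply: (rcoprime_dvdl (usq i hi).2); exact: cop0.
  + exact: ucop.
- move=> j hj; rewrite ltn_eqF; last by lia.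
  by apply: u1; lia.
- lia.
- rewrite (@upd R u x (k N.+1) 1 M.+1 (fun j => j)); last by apply: u1; lia.
    2: lia.
  rewrite e (big_nat_recr N) // (big_nat_recr N.+1) // (big_nat_recr N) //=.
  rewrite /k' eqxx (@eq_big_nat _ _ _ 1 N (fun i => t i ^+ (if i == N then (k N + k N.+1)%N else k i))
     (fun i => t i ^+ k i)); last by move=> i hi; rewrite ltn_eqF //; lia.
  by rewrite ex exprD exprMn; ring.
Qed.

Lemma p56 (R : comUnitRingType) (a : R) :
  (exists (n : nat) (s : nat -> R) (k : nat -> nat) (c : R),
      (1 <= n)%N /\
      (forall i, (1 <= i <= n)%N -> sqfree (s i) /\ s i \isn't a GRing.unit) /\
      (forall i, (1 <= i <= n)%N -> (1 <= k i)%N) /\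
      (forall i, (1 <= i < n)%N -> rdvd (s i) (s i.+1) /\ ~ rassoc (s i) (s i.+1)) /\
      c \is a GRing.unit /\
      a = c * \prod_(1 <= i < n.+1) s i ^+ k i) ->
  exists (n : nat) (s : nat -> R),
      (1 <= n)%N /\
      (forall i, (1 <= i <= n)%N -> sqfree (s i)) /\
      (forall i j, (1 <= i <= n)%N -> (1 <= j <= n)%N -> i != j -> rcoprime (s i) (s j)) /\
      a = \prod_(1 <= i < n.+1) s i ^+ i.
Proof.
move=> [N [t [k [c [N1 [tsq [k1 [tch [cu ea]]]]]]]]].
have [M [u [usq ucop u1 kM e]]] := @c56_ind R t N k N1 (fun i hi => (tch i hi).1)
   (tsq N ltac:(lia)).1 k1.
have M1 : (1 <= M)%N by have := k1 N; lia.
exists M, (fun j => if j == 1%N then c * u j else u j); split => //.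
split.
  move=> j hj; have sT := (usq j hj).1.
  by case: ifP => _ //; apply: sqfree_mulu.
split.
  move=> j j' hj hj' ne; have cT := ucop j j' hj hj' ne.
  case: ifP => _; case: ifP => _ //.
  - by apply: rcoprime_mulu => //; apply/rcoprime_sym/rcoprime_mulu => //; apply: rcoprime_sym.
  - exact: rcoprime_mulu.
  - by apply/rcoprime_sym/rcoprime_mulu => //; apply: rcoprime_sym.
by rewrite (@absorb R c u (fun j => j) 1 M.+1) // e ea.
Qed.

Unset Implicit Arguments.

Theorem proposition1 (R : comUnitRingType) (a : R)
  (ha0 : a != 0) (hau : a \isn't a GRing.unit) :
  let C1 := exists b c : R, sqfree c /\ a = b ^+ 2 * c in
  let C2 := exists (n : nat) (s : nat -> R),
      (forall i, (i <= n)%N -> sqfree (s i)) /\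
      a = \prod_(0 <= i < n.+1) s i ^+ (2 ^ i)%N in
  let C3 := exists (n : nat) (s : nat -> R) (k : nat -> nat) (c : R),
      (1 <= n)%N /\
      (forall i, (1 <= i <= n)%N -> sqfree (s i) /\ s i \isn't a GRing.unit) /\
      (forall i, (1 <= i < n)%N -> (k i < k i.+1)%N) /\
      c \is a GRing.unit /\
      a = c * \prod_(1 <= i < n.+1) s i ^+ (2 ^ k i)%N in
  let C4 := exists (n : nat) (s : nat -> R),
      (1 <= n)%N /\
      (forall i, (1 <= i <= n)%N -> sqfree (s i)) /\
      (forall i, (1 <= i < n)%N -> rdvd (s i) (s i.+1)) /\
      a = \prod_(1 <= i < n.+1) s i in
  let C5 := exists (n : nat) (s : nat -> R) (k : nat -> nat) (c : R),
      (1 <= n)%N /\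
      (forall i, (1 <= i <= n)%N -> sqfree (s i) /\ s i \isn't a GRing.unit) /\
      (forall i, (1 <= i <= n)%N -> (1 <= k i)%N) /\
      (forall i, (1 <= i < n)%N -> rdvd (s i) (s i.+1) /\ ~ rassoc (s i) (s i.+1)) /\
      c \is a GRing.unit /\
      a = c * \prod_(1 <= i < n.+1) s i ^+ k i in
  let C6 := exists (n : nat) (s : nat -> R),
      (1 <= n)%N /\
      (forall i, (1 <= i <= n)%N -> sqfree (s i)) /\
      (forall i j, (1 <= i <= n)%N -> (1 <= j <= n)%N -> i != j -> rcoprime (s i) (s j)) /\
      a = \prod_(1 <= i < n.+1) s i ^+ i in
  let C7 := exists (n : nat) (s : nat -> R) (k : nat -> nat) (c : R),
      (1 <= n)%N /\
      (forall i, (1 <= i <= n)%N -> sqfree (s i) /\ s i \isn't a GRing.unit) /\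
      (1 <= k 1)%N /\
      (forall i, (1 <= i < n)%N -> (k i < k i.+1)%N) /\
      (forall i j, (1 <= i <= n)%N -> (1 <= j <= n)%N -> i != j -> rcoprime (s i) (s j)) /\
      c \is a GRing.unit /\
      a = c * \prod_(1 <= i < n.+1) s i ^+ k i in
  (C2 -> C1) /\ (C2 <-> C3) /\ (C4 <-> C5) /\ (C5 -> C6) /\ (C6 <-> C7).

Proof.
move=> C1 C2 C3 C4 C5 C6 C7.
split; first exact: p21.
split; first by split; [exact: p23 | exact: p32].
split; first by split; [exact: p45 | exact: p54].
split; first exact: p56.
by split; [exact: p67 | exact: p76].
Qed.
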